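(* Let $\alpha=(\alpha_n)_{n\in\mathbb{N}}\in\ell^2$. The Rhaly operator $R_\alpha$ is bounded on $\ell^2$ if and only if the sequence $(\sigma_k)_{k\ge-1}$ is bounded. Moreover $$\frac{1}{\sqrt2}\sup_{h\ge-1}\sigma_h\le\|R_\alpha\|\le4\sqrt2\sup_{h\ge-1}\sigma_h.$$
   Context: $\mathbb{N}=\{0,1,2,\dots\}$; $\ell^2$ is the space of square-summable functions $\mathbb{N}\to\mathbb{C}$. The Rhaly operator is $(R_\alpha f)(k)=\alpha_k\sum_{j=0}^k f(j)$, with operator norm $\|R_\alpha\|=\sup_{\|f\|_2=1}\|R_\alpha f\|_2$ (possibly $+\infty$). Define $\sigma_{-1}=|\alpha_0|$ and, for $k\in\mathbb{N}$, $\sigma_k=\big(\sum_{j=2^k}^{2^{k+1}-1}(j+1)|\alpha_j|^2\big)^{1/2}$. *)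

(* Defs.v *)
From Stdlib Require Import Reals.
From Coquelicot Require Import Coquelicot.
Open Scope R_scope.

Definition sq_summable (f : nat -> C) : Prop :=
  ex_series (fun n => (Cmod (f n)) ^ 2).

Definition l2norm (f : nat -> C) : R :=
  sqrt (Series (fun n => (Cmod (f n)) ^ 2)).

Definition l2normE (f : nat -> C) : Rbar :=
  match Lim_seq (fun n => sum_n (fun k => (Cmod (f k)) ^ 2) n) with
  | Finite r => Finite (sqrt r)
  | p_infty => p_infty
  | m_infty => Finite 0
  end.

Definition Rhaly (alpha f : nat -> C) (k : nat) : C :=
  Cmult (alpha k) (sum_n f k).

Definition opnorm (alpha : nat -> C) : Rbar :=
  Rbar_lub (fun r => exists f, sq_summable f /\ l2norm f = 1 /\ r = l2normE (Rhaly alpha f)).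

Definition Rhaly_bounded (alpha : nat -> C) : Prop :=
  exists M : R, forall f, sq_summable f ->
    sq_summable (Rhaly alpha f) /\ l2norm (Rhaly alpha f) <= M * l2norm f.

Definition sigma_m1 (alpha : nat -> C) : R := Cmod (alpha 0%nat).
Definition sigma (alpha : nat -> C) (k : nat) : R :=
  sqrt (sum_n_m (fun j => (INR j + 1) * (Cmod (alpha j)) ^ 2) (2 ^ k)%nat (2 ^ (k + 1) - 1)%nat).

Definition sigma_bounded (alpha : nat -> C) : Prop :=
  exists M : R, sigma_m1 alpha <= M /\ forall k, sigma alpha k <= M.

Definition sup_sigma (alpha : nat -> C) : Rbar :=
  Rbar_lub (fun r => r = Finite (sigma_m1 alpha) \/ exists k, r = Finite (sigma alpha k)).

(* Main.v *)
Require Import Defs.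
From Stdlib Require Import Reals Lra Lia.
From Coquelicot Require Import Coquelicot.
Open Scope R_scope.

Lemma Rplus_eq (a b : R) : plus a b = a + b. Proof. reflexivity. Qed.
Lemma Rmult_eq (a b : R) : mult a b = a * b. Proof. reflexivity. Qed.
Ltac rp := repeat match goal with
  | |- context[@plus ?G ?a ?b] => change (@plus G a b) with (Rplus a b)
  | |- context[@mult ?G ?a ?b] => change (@mult G a b) with (Rmult a b)
  | |- context[@zero ?G] => change (@zero G) with R0
  | H : context[@plus ?G ?a ?b] |- _ => change (@plus G a b) with (Rplus a b) in H
  | H : context[@mult ?G ?a ?b] |- _ => change (@mult G a b) with (Rmult a b) in H
  end;
  try match goal with |- @eq _ ?a ?b => change (@eq R a b) end.

Lemma sum_n_m_le_loc (a b : nat -> R) (n m : nat) :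
  (forall k, (n <= k <= m)%nat -> a k <= b k) -> sum_n_m a n m <= sum_n_m b n m.
Proof.
  induction m as [|m IH]; intros H.
  - destruct n as [|n].
    + rewrite !sum_n_n. apply H. lia.
    + rewrite !sum_n_m_zero by lia. lra.
  - destruct (Nat.le_gt_cases n (S m)) as [Hn|Hn].
    + destruct (Nat.eq_dec n (S m)) as [->|Hne].
      * rewrite !sum_n_n. apply H. lia.
      * rewrite !sum_n_Sm by lia. rp.
        apply Rplus_le_compat. apply IH. intros k Hk; apply H; lia. apply H; lia.
    + rewrite !sum_n_m_zero by lia. lra.
Qed.

Lemma sum_n_m_nonneg (a : nat -> R) n m : (forall k, 0 <= a k) -> 0 <= sum_n_m a n m.
Proof.
  intros H. eapply Rle_trans with (sum_n_m (fun _ => 0) n m).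
  rewrite sum_n_m_const. lra. apply sum_n_m_le. exact H.
Qed.

Lemma sum_n_m_mono (a : nat -> R) n m n' m' : (forall k, 0 <= a k) ->
  (n' <= n)%nat -> (m <= m')%nat -> sum_n_m a n m <= sum_n_m a n' m'.
Proof.
  intros Ha H1 H2.
  destruct (Nat.lt_ge_cases m n) as [Hl|Hl].
  { rewrite sum_n_m_zero by lia. apply sum_n_m_nonneg; auto. }
  assert (E1 : sum_n_m a n m' = plus (sum_n_m a n m) (sum_n_m a (S m) m'))
    by (apply sum_n_m_Chasles; lia).
  assert (E2 : n = n' \/ sum_n_m a n' m' = plus (sum_n_m a n' (pred n)) (sum_n_m a (S (pred n)) m')).
  { destruct n as [|n]. left; lia. right. apply sum_n_m_Chasles; simpl; lia. }
  assert (P1 := sum_n_m_nonneg a (S m) m' Ha).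
  destruct E2 as [<-|E2].
  - rewrite E1. rp. lra.
  - assert (P2 := sum_n_m_nonneg a n' (pred n) Ha).
    destruct n as [|n]; [assert (n' = 0%nat) as -> by lia; rewrite E1; rp; lra|]. simpl in E2, P2. rewrite E2, E1. rp. lra.
Qed.

Lemma sum_n_mono (a : nat -> R) n m : (forall k, 0 <= a k) -> (n <= m)%nat -> sum_n a n <= sum_n a m.
Proof. intros; apply sum_n_m_mono; auto. Qed.

Lemma wCS (g w : nat -> R) : (forall j, 0 < w j) -> forall k,
  0 < sum_n w k /\ 0 <= sum_n (fun j => g j ^ 2 / w j) k /\
  (sum_n g k) ^ 2 <= sum_n w k * sum_n (fun j => g j ^ 2 / w j) k.
Proof.
  intros Hw k. induction k as [|k [IH1 [IH2 IH3]]].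
  - rewrite !sum_O. specialize (Hw 0%nat). split; [lra|]. split.
    apply Rmult_le_pos. apply pow2_ge_0. left; apply Rinv_0_lt_compat; lra.
    right. field. lra.
  - rewrite !sum_Sn. rp.
    set (G := sum_n g k) in *. set (V := sum_n w k) in *.
    set (Q := sum_n (fun j => g j ^ 2 / w j) k) in *.
    specialize (Hw (S k)). set (x := g (S k)) in *. set (y := w (S k)) in *.
    assert (0 <= x ^ 2 / y) by (apply Rmult_le_pos; [apply pow2_ge_0| left; apply Rinv_0_lt_compat; lra]).
    split; [lra|]. split; [lra|].
    set (t := x / y).
    assert (Ex : x = t * y) by (unfold t; field; lra).
    assert (Ex2 : x ^ 2 / y = t ^ 2 * y) by (rewrite Ex; field; lra).
    rewrite Ex2. rewrite Ex.
    assert (H0 := pow2_ge_0 (V*t - G)).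
    assert (Hq : 0 <= V * (V * t ^ 2 - 2 * G * t + Q)) by nra.
    assert (Hq2 : 0 <= V * t ^ 2 - 2 * G * t + Q).
    { destruct (Rle_lt_dec 0 (V * t ^ 2 - 2 * G * t + Q)); auto. nra. }
    assert (0 <= y * (V*t^2 - 2*G*t + Q)) by (apply Rmult_le_pos; lra).
    nra.
Qed.

Lemma exch (c q : nat -> R) N :
  sum_n (fun k => c k * sum_n q k) N = sum_n (fun j => q j * sum_n_m c j N) N.
Proof.
  induction N as [|N IH].
  - rewrite !sum_O, sum_n_n. rp. ring.
  - rewrite (sum_Sn (fun k => c k * sum_n q k)). rp. rewrite IH.
    rewrite (sum_Sn (fun j => q j * sum_n_m c j (S N))). rp.
    rewrite sum_n_n.
    rewrite (sum_n_ext_loc (fun j => q j * sum_n_m c j (S N)) (fun j => q j * sum_n_m c j N + c (S N) * q j)).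
    2:{ intros n Hn. rewrite sum_n_Sm by lia. rp. ring. }
    rewrite (sum_n_plus (fun j => q j * sum_n_m c j N) (fun j => c (S N) * q j)). rp.
    rewrite (sum_n_mult_l (c (S N)) q). rp. rewrite sum_Sn. rp. set (A1 := sum_n (fun j : nat => q j * sum_n_m c j N) N). set (A2 := sum_n q N). change (@sum_n (Ring.AbelianMonoid R_Ring) q N) with A2. ring.
Qed.

Definition bb (j : nat) : nat := Nat.log2 (2 * j + 1).

Lemma pow2_S m : (2 ^ (m + 1) = 2 * 2 ^ m)%nat.
Proof. rewrite Nat.add_1_r, Nat.pow_succ_r; lia. Qed.

Lemma pow2_pos m : (1 <= 2 ^ m)%nat.
Proof. assert (H := Nat.pow_nonzero 2 m). lia. Qed.

Lemma bb_lt j : (j < 2 ^ bb j)%nat.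
Proof.
  unfold bb. destruct (Nat.log2_spec (2*j+1)) as [_ H]; [lia|].
  rewrite Nat.pow_succ_r in H by lia. lia.
Qed.

Lemma bb_block m j : (2 ^ m <= j <= 2 ^ (m + 1) - 1)%nat -> bb j = S m.
Proof.
  intros H. assert (P := pow2_pos m). rewrite pow2_S in H. unfold bb. apply Nat.log2_unique. lia.
  rewrite !Nat.pow_succ_r by lia. lia.
Qed.

Lemma bb0 : bb 0 = 0%nat.
Proof. reflexivity. Qed.

Lemma V_bound k : sum_n (fun j => (3/4) ^ bb j) k <= 2 * (3/2) ^ bb k.
Proof.
  assert (Hw : forall j, 0 <= (3/4) ^ bb j) by (intros; apply pow_le; lra).
  assert (Hm : forall m, sum_n (fun j => (3/4) ^ bb j) (2 ^ m - 1) <= 2 * (3/2) ^ m).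
  { induction m as [|m IH].
    - simpl. rewrite sum_O. rewrite bb0. simpl. lra.
    - assert (E : sum_n (fun j => (3/4) ^ bb j) (2 ^ S m - 1) =
        plus (sum_n (fun j => (3/4) ^ bb j) (2 ^ m - 1))
             (sum_n_m (fun j => (3/4) ^ bb j) (S (2 ^ m - 1)) (2 ^ S m - 1))).
      { apply sum_n_m_Chasles. lia. rewrite ?Nat.pow_succ_r by lia. lia. }
      rewrite E. rp.
      assert (P := pow2_pos m).
      replace (S (2 ^ m - 1)) with (2 ^ m)%nat by lia.
      rewrite (sum_n_m_ext_loc _ (fun _ => (3/4) ^ S m)).
      2:{ intros j Hj. rewrite (bb_block m j); auto. rewrite Nat.add_1_r. lia. }
      rewrite sum_n_m_const.
      replace (S (2 ^ S m - 1) - 2 ^ m)%nat with (2 ^ m)%nat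
        by (rewrite ?Nat.pow_succ_r by lia; lia).
      rewrite pow_INR. simpl INR.
      replace (1 + 1) with 2 by lra.
      assert (E2 : 2 ^ m * (3/4) ^ S m = (3/4) * (3/2) ^ m).
      { simpl. replace (3/2) with (2 * (3/4)) by lra. rewrite Rpow_mult_distr. ring. }
      rewrite E2. simpl. assert (0 <= (3/2)^m) by (apply pow_le; lra). lra. }
  eapply Rle_trans. 2: apply Hm.
  apply sum_n_mono; auto. assert (H := bb_lt k). lia.
Qed.

Section Tail.
Variable a : nat -> R.
Variable S2 : R.
Hypothesis Ha : forall k, 0 <= a k.
Hypothesis HS2 : 0 <= S2.
Hypothesis Ha0 : a 0%nat <= S2.
Hypothesis HS : forall m, sum_n_m (fun j => (INR j + 1) * a j) (2 ^ m) (2 ^ (m + 1) - 1) <= S2.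

Let c k := a k * (3/2) ^ bb k.

Lemma c_nonneg k : 0 <= c k.
Proof. unfold c. apply Rmult_le_pos; auto. apply pow_le; lra. Qed.

Lemma block_bound m : sum_n_m c (2 ^ m) (2 ^ (m + 1) - 1) <= (3/2) * S2 * (3/4) ^ m.
Proof.
  unfold c.
  rewrite (sum_n_m_ext_loc _ (fun k => a k * (3/2) ^ S m)).
  2:{ intros j Hj. rewrite (bb_block m j); auto. }
  rewrite (sum_n_m_mult_r ((3/2) ^ S m) a). rp.
  set (A := sum_n_m a (2 ^ m) (2 ^ (m + 1) - 1)).
  assert (HA : 2 ^ m * A <= S2).
  { eapply Rle_trans. 2: apply (HS m).
    unfold A. rewrite <- (sum_n_m_mult_l (2 ^ m) a). rp.
    apply sum_n_m_le_loc. intros k Hk.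
    apply Rmult_le_compat_r; auto.
    assert (INR (2 ^ m) <= INR k) by (apply le_INR; lia).
    rewrite pow_INR in H. simpl INR in H. replace (1 + 1) with 2 in H by lra. lra. }
  assert (E : (3/2) ^ S m = (3/2) * (2 ^ m * (3/4) ^ m)).
  { rewrite <- Rpow_mult_distr. simpl. replace (2 * (3/4)) with (3/2) by lra. ring. }
  rewrite E.
  assert (0 <= (3/4) ^ m) by (apply pow_le; lra).
  assert (0 <= (S2 - 2^m * A) * (3/4)^m) by (apply Rmult_le_pos; lra).
  match goal with |- context[@sum_n_m ?G a ?x ?y] => change (@sum_n_m G a x y) with A end.
  nra.
Qed.

Lemma tail_blocks n : forall m, sum_n_m c (2 ^ m) (2 ^ (m + n) - 1) <= 6 * S2 * (3/4) ^ m.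
Proof.
  induction n as [|n IH]; intros m.
  - rewrite Nat.add_0_r. assert (P := pow2_pos m).
    rewrite sum_n_m_zero by lia.
    assert (0 <= (3/4) ^ m) by (apply pow_le; lra). rp. apply Rmult_le_pos; lra.
  - assert (P := pow2_pos m).
    assert (E : sum_n_m c (2 ^ m) (2 ^ (m + S n) - 1) =
      plus (sum_n_m c (2 ^ m) (2 ^ (m + 1) - 1)) (sum_n_m c (S (2 ^ (m + 1) - 1)) (2 ^ (m + S n) - 1))).
    { apply sum_n_m_Chasles. rewrite pow2_S. lia.
      assert (2 ^ (m + 1) <= 2 ^ (m + S n))%nat by (apply Nat.pow_le_mono_r; lia). lia. }
    rewrite E. rp.
    replace (S (2 ^ (m + 1) - 1)) with (2 ^ S m)%nat by (rewrite pow2_S, Nat.pow_succ_r; lia).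
    replace (m + S n)%nat with (S m + n)%nat by lia.
    assert (H1 := block_bound m). assert (H2 := IH (S m)).
    simpl pow in H2 |- *. 
    assert (0 <= (3/4) ^ m) by (apply pow_le; lra).
    nra.
Qed.

Lemma tail_general j N : sum_n_m c j N <= 8 * S2 * (3/4) ^ bb j.
Proof.
  assert (Hc := c_nonneg).
  destruct j as [|j].
  - rewrite bb0. simpl.
    destruct N as [|N].
    + rewrite sum_n_n. unfold c. rewrite bb0. simpl. lra.
    + rewrite sum_Sn_m by lia. rp.
      assert (H := sum_n_m_mono c 1 (S N) (2 ^ 0) (2 ^ (0 + S N) - 1) Hc).
      assert (H2 := tail_blocks (S N) 0).
      assert (S N < 2 ^ (S N))%nat by (apply Nat.pow_gt_lin_r; lia).
      simpl plus in H. simpl pow in H2. unfold c at 1. rewrite bb0. simpl.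
      assert (sum_n_m c 1 (S N) <= 6 * S2 * 1).
      { eapply Rle_trans. apply H. simpl; lia. simpl in H0 |- *. lia. lra. }
      lra.
  - set (m := Nat.log2 (S j)).
    destruct (Nat.log2_spec (S j)) as [L1 L2]; [lia|]. fold m in L1, L2.
    assert (Hb : bb (S j) = S m).
    { apply bb_block. rewrite pow2_S. rewrite Nat.pow_succ_r in L2 by lia. lia. }
    rewrite Hb.
    assert (H := sum_n_m_mono c (S j) N (2 ^ m) (2 ^ (m + N) - 1) Hc).
    assert (N < 2 ^ N)%nat by (apply Nat.pow_gt_lin_r; lia).
    assert (2 ^ N <= 2 ^ (m + N))%nat by (apply Nat.pow_le_mono_r; lia).
    assert (H2 := tail_blocks N m).
    eapply Rle_trans. apply H; lia.
    simpl. assert (0 <= (3/4) ^ m) by (apply pow_le; lra). nra.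
Qed.

End Tail.

Lemma sum_n_le_pt (f h : nat -> R) N : (forall k, f k <= h k) -> sum_n f N <= sum_n h N.
Proof. intros H. apply sum_n_m_le. exact H. Qed.

Lemma main_fin (a g : nat -> R) (S2 : R) :
  (forall k, 0 <= a k) -> 0 <= S2 -> a 0%nat <= S2 ->
  (forall m, sum_n_m (fun j => (INR j + 1) * a j) (2 ^ m) (2 ^ (m + 1) - 1) <= S2) ->
  forall N, sum_n (fun k => a k * (sum_n g k) ^ 2) N <= 16 * S2 * sum_n (fun j => g j ^ 2) N.
Proof.
  intros Ha HS2 Ha0 HS N.
  set (w := fun j => (3/4) ^ bb j).
  assert (Hw : forall j, 0 < w j) by (intros; unfold w; apply pow_lt; lra).
  set (q := fun j => g j ^ 2 / w j).
  set (cc := fun k => 2 * (a k * (3/2) ^ bb k)).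
  apply Rle_trans with (sum_n (fun k => cc k * sum_n q k) N).
  { apply sum_n_le_pt. intros k.
    destruct (wCS g w Hw k) as [_ [HQ HC]].
    assert (HV := V_bound k). fold w in HV. fold q in HQ, HC.
    unfold cc.
    apply Rle_trans with (a k * (sum_n w k * sum_n q k)).
    apply Rmult_le_compat_l; auto.
    replace (2 * (a k * (3 / 2) ^ bb k) * sum_n q k) with (a k * ((2 * (3 / 2) ^ bb k) * sum_n q k)) by ring.
    apply Rmult_le_compat_l; auto. apply Rmult_le_compat_r; auto. }
  rewrite exch.
  apply Rle_trans with (sum_n (fun j => q j * (16 * S2 * w j)) N).
  { apply sum_n_le_pt. intros j.
    assert (Hq : 0 <= q j).
    { unfold q. apply Rmult_le_pos. apply pow2_ge_0. left. apply Rinv_0_lt_compat. auto. }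
    apply Rmult_le_compat_l; auto.
    unfold cc. rewrite (sum_n_m_mult_l 2 (fun k => a k * (3/2) ^ bb k)). rp.
    assert (H := tail_general a S2 Ha HS2 Ha0 HS j N).
    match goal with |- context[@sum_n_m ?G ?f j N] => change (@sum_n_m G f j N) with (sum_n_m (fun k => a k * (3/2) ^ bb k) j N) end.
    unfold w. lra. }
  rewrite (sum_n_ext _ (fun j => (16 * S2) * g j ^ 2)).
  2:{ intros j. unfold q. specialize (Hw j). rp. field. lra. }
  rewrite (sum_n_mult_l (16 * S2) (fun j => g j ^ 2)). rp. right. reflexivity.
Qed.

Lemma nn_incr (u : nat -> R) : (forall k, 0 <= u k) -> forall n, sum_n u n <= sum_n u (S n).
Proof. intros H n. rewrite sum_Sn. rp. specialize (H (S n)). lra. Qed.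

Lemma nn_sum_nonneg (u : nat -> R) : (forall k, 0 <= u k) -> forall n, 0 <= sum_n u n.
Proof. intros H n. apply sum_n_m_nonneg. exact H. Qed.

Lemma nn_series_ge (u : nat -> R) : (forall k, 0 <= u k) -> ex_series u ->
  forall N, sum_n u N <= Series u.
Proof.
  intros H Hs N. assert (L := Series_correct u Hs).
  apply (is_lim_seq_incr_compare (sum_n u) (Series u)); [exact L| apply nn_incr; auto].
Qed.

Lemma nn_series_bound (u : nat -> R) (B : R) : (forall k, 0 <= u k) ->
  (forall N, sum_n u N <= B) -> ex_series u /\ Series u <= B.
Proof.
  intros H HB.
  assert (L := Lim_seq_correct (sum_n u) (ex_lim_seq_incr _ (nn_incr u H))).
  assert (L1 := is_lim_seq_le _ _ _ _ HB L (is_lim_seq_const B)).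
  assert (L2 := is_lim_seq_le _ _ _ _ (nn_sum_nonneg u H) (is_lim_seq_const 0) L).
  unfold Series. destruct (Lim_seq (sum_n u)) as [r| |] eqn:E; simpl in L1, L2 |- *.
  - split; [exists r; exact L| exact L1].
  - contradiction.
  - contradiction.
Qed.

Definition ps (g : nat -> C) (N : nat) : R := sum_n (fun k => Cmod (g k) ^ 2) N.

Lemma sq_nonneg_C (g : nat -> C) k : 0 <= Cmod (g k) ^ 2.
Proof. apply pow2_ge_0. Qed.

Lemma l2normE_ge (g : nat -> C) N : Rbar_le (Finite (sqrt (ps g N))) (l2normE g).
Proof.
  set (u := fun k => Cmod (g k) ^ 2).
  assert (H : forall k, 0 <= u k) by (intros; apply sq_nonneg_C).
  assert (L := Lim_seq_correct (sum_n u) (ex_lim_seq_incr _ (nn_incr u H))).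
  assert (L2 := is_lim_seq_le _ _ _ _ (nn_sum_nonneg u H) (is_lim_seq_const 0) L).
  unfold l2normE. fold u.
  destruct (Lim_seq (sum_n u)) as [r| |] eqn:E; simpl in L2 |- *.
  - apply sqrt_le_1_alt. apply (is_lim_seq_incr_compare (sum_n u) r); [exact L| apply nn_incr; auto].
  - exact I.
  - contradiction.
Qed.

Lemma l2normE_eq (g : nat -> C) : sq_summable g -> l2normE g = Finite (l2norm g).
Proof.
  intros Hs. assert (L := Series_correct _ Hs).
  assert (E : Lim_seq (fun n => sum_n (fun k => Cmod (g k) ^ 2) n) = Finite (Series (fun k => Cmod (g k) ^ 2))).
  { apply is_lim_seq_unique. exact L. }
  unfold l2normE. rewrite E. reflexivity.
Qed.

Lemma l2norm_ge (g : nat -> C) N : sq_summable g -> sqrt (ps g N) <= l2norm g.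
Proof.
  intros Hs. unfold l2norm. apply sqrt_le_1_alt. apply nn_series_ge; auto. intros; apply sq_nonneg_C.
Qed.

Lemma Rhaly_ps (alpha f : nat -> C) N :
  ps (Rhaly alpha f) N <= sum_n (fun k => Cmod (alpha k) ^ 2 * (sum_n (fun j => Cmod (f j)) k) ^ 2) N.
Proof.
  unfold ps. apply sum_n_le_pt. intros k. unfold Rhaly. rewrite Cmod_mult.
  rewrite Rpow_mult_distr. apply Rmult_le_compat_l. apply pow2_ge_0.
  apply pow_incr. split. apply Cmod_ge_0.
  apply (norm_sum_n_m f 0 k).
Qed.

Lemma sigma_hyps (alpha : nat -> C) (M : R) :
  sigma_m1 alpha <= M -> (forall k, Defs.sigma alpha k <= M) ->
  0 <= M /\ Cmod (alpha 0%nat) ^ 2 <= M ^ 2 /\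
  (forall m, sum_n_m (fun j => (INR j + 1) * Cmod (alpha j) ^ 2) (2 ^ m) (2 ^ (m + 1) - 1) <= M ^ 2).
Proof.
  intros H0 Hk. unfold sigma_m1 in H0.
  assert (HM : 0 <= M) by (assert (T := Cmod_ge_0 (alpha 0%nat)); lra).
  split; auto. split.
  { apply pow_incr. split; auto. apply Cmod_ge_0. }
  intros m. specialize (Hk m). unfold Defs.sigma in Hk.
  set (X := sum_n_m _ _ _) in *.
  assert (HX : 0 <= X).
  { apply sum_n_m_nonneg. intros j. apply Rmult_le_pos. pose proof (pos_INR j); lra. apply pow2_ge_0. }
  rewrite <- (pow2_sqrt X HX). apply pow_incr. split; auto. apply sqrt_pos.
Qed.

Lemma upper_main (alpha : nat -> C) (M : R) :
  sigma_m1 alpha <= M -> (forall k, Defs.sigma alpha k <= M) ->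
  forall f, sq_summable f -> sq_summable (Rhaly alpha f) /\ l2norm (Rhaly alpha f) <= 4 * M * l2norm f.
Proof.
  intros H0 Hk f Hf.
  destruct (sigma_hyps alpha M H0 Hk) as [HM [Ha0 HS]].
  set (X := Series (fun k => Cmod (f k) ^ 2)).
  assert (HX : 0 <= X).
  { eapply Rle_trans. 2: apply (nn_series_ge _ (sq_nonneg_C f) Hf 0). apply nn_sum_nonneg, sq_nonneg_C. }
  assert (B : forall N, sum_n (fun k => Cmod (Rhaly alpha f k) ^ 2) N <= 16 * M ^ 2 * X).
  { intros N. eapply Rle_trans. apply Rhaly_ps.
    eapply Rle_trans. apply (main_fin (fun k => Cmod (alpha k) ^ 2) (fun j => Cmod (f j)) (M ^ 2)); auto.
    intros; apply pow2_ge_0. apply pow2_ge_0.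
    apply Rmult_le_compat_l. assert (0 <= M^2) by apply pow2_ge_0. lra.
    apply (nn_series_ge _ (sq_nonneg_C f) Hf N). }
  destruct (nn_series_bound _ _ (sq_nonneg_C (Rhaly alpha f)) B) as [Hs Hle].
  split; auto.
  unfold l2norm. fold X.
  replace (16 * M ^ 2 * X) with ((4 * M) ^ 2 * X) in Hle by ring.
  eapply Rle_trans. apply sqrt_le_1_alt. exact Hle.
  rewrite sqrt_mult_alt by apply pow2_ge_0. rewrite sqrt_pow2 by lra. lra.
Qed.

Definition tf (n : nat) (j : nat) : C := if (j <? n)%nat then RtoC (/ sqrt (INR n)) else RtoC 0.

Lemma tf_sq n j : (1 <= n)%nat -> Cmod (tf n j) ^ 2 = if (j <? n)%nat then / INR n else 0.
Proof.
  intros Hn. assert (Hp : 0 < INR n) by (apply lt_0_INR; lia).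
  assert (Hs := sqrt_lt_R0 _ Hp).
  unfold tf. destruct (j <? n)%nat; rewrite Cmod_R.
  - rewrite Rabs_pos_eq by (left; apply Rinv_0_lt_compat; lra).
    replace ((/ sqrt (INR n)) ^ 2) with (/ (sqrt (INR n) ^ 2)) by (field; lra).
    rewrite pow2_sqrt by lra. reflexivity.
  - rewrite Rabs_R0. simpl. ring.
Qed.

Lemma tf_ps n N : (1 <= n)%nat -> ps (tf n) N = INR (Nat.min (S N) n) / INR n.
Proof.
  intros Hn. unfold ps. induction N as [|N IH].
  - rewrite sum_O, tf_sq by auto.
    destruct (Nat.ltb_spec 0 n); [|lia]. replace (Nat.min 1 n) with 1%nat by lia. simpl. field.
    apply not_0_INR; lia.
  - rewrite sum_Sn. rp. rewrite IH, tf_sq by auto.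
    destruct (Nat.ltb_spec (S N) n).
    + replace (Nat.min (S N) n) with (S N) by lia. replace (Nat.min (S (S N)) n) with (S (S N)) by lia.
      rewrite (S_INR (S N)). field. apply not_0_INR; lia.
    + replace (Nat.min (S N) n) with n by lia. replace (Nat.min (S (S N)) n) with n by lia. ring.
Qed.

Lemma tf_l2 n : (1 <= n)%nat -> sq_summable (tf n) /\ l2norm (tf n) = 1.
Proof.
  intros Hn. assert (Hp : 0 < INR n) by (apply lt_0_INR; lia).
  assert (B : forall N, sum_n (fun k => Cmod (tf n k) ^ 2) N <= 1).
  { intros N. change (ps (tf n) N <= 1). rewrite tf_ps by auto.
    assert (INR (Nat.min (S N) n) <= INR n) by (apply le_INR; lia).
    apply Rmult_le_reg_r with (INR n); auto. field_simplify; lra. }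
  destruct (nn_series_bound _ _ (sq_nonneg_C (tf n)) B) as [Hs Hle].
  split; auto.
  assert (G := nn_series_ge _ (sq_nonneg_C (tf n)) Hs (n - 1)).
  change (sum_n (fun k => Cmod (tf n k) ^ 2) (n - 1)) with (ps (tf n) (n - 1)) in G.
  rewrite tf_ps in G by auto. replace (Nat.min (S (n - 1)) n) with n in G by lia.
  replace (INR n / INR n) with 1 in G by (field; lra).
  unfold l2norm. replace (Series (fun n0 : nat => Cmod (tf n n0) ^ 2)) with 1 by lra.
  apply sqrt_1.
Qed.

Lemma tf_sum n k : (k < n)%nat -> sum_n (tf n) k = RtoC (INR (S k) * / sqrt (INR n)).
Proof.
  intros Hk. induction k as [|k IH].
  - rewrite sum_O. unfold tf. destruct (Nat.ltb_spec 0 n); [|lia]. f_equal. simpl. ring.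
  - rewrite sum_Sn. rewrite IH by lia. unfold tf. destruct (Nat.ltb_spec (S k) n); [|lia].
    change (plus (RtoC (INR (S k) * / sqrt (INR n))) (RtoC (/ sqrt (INR n))))
      with (Cplus (RtoC (INR (S k) * / sqrt (INR n))) (RtoC (/ sqrt (INR n)))).
    rewrite <- RtoC_plus. f_equal. rewrite (S_INR (S k)). ring.
Qed.

Lemma tf_Rps (alpha : nat -> C) n : (1 <= n)%nat ->
  ps (Rhaly alpha (tf n)) (n - 1) = sum_n (fun k => Cmod (alpha k) ^ 2 * INR (S k) ^ 2 / INR n) (n - 1).
Proof.
  intros Hn. assert (Hp : 0 < INR n) by (apply lt_0_INR; lia).
  assert (Hs := sqrt_lt_R0 _ Hp).
  unfold ps. apply sum_n_ext_loc. intros k Hk.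
  unfold Rhaly. rewrite tf_sum by lia. rewrite Cmod_mult, Cmod_R.
  rewrite Rabs_pos_eq.
  2:{ apply Rmult_le_pos. apply pos_INR. left; apply Rinv_0_lt_compat; lra. }
  rp. rewrite Rpow_mult_distr, Rpow_mult_distr.
  replace ((/ sqrt (INR n)) ^ 2) with (/ (sqrt (INR n) ^ 2)) by (field; lra).
  rewrite pow2_sqrt by lra. field. lra.
Qed.

Lemma lower_set (alpha : nat -> C) s :
  (s = sigma_m1 alpha \/ exists h, s = Defs.sigma alpha h) ->
  0 <= s /\ exists f, sq_summable f /\ l2norm f = 1 /\ exists N, s ^ 2 / 2 <= ps (Rhaly alpha f) N.
Proof.
  intros [Hs | [h Hs]].
  - subst s. unfold sigma_m1. split. apply Cmod_ge_0.
    exists (tf 1). destruct (tf_l2 1) as [A B]; auto. split; auto. split; auto.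
    exists 0%nat. replace (ps (Rhaly alpha (tf 1)) 0) with (ps (Rhaly alpha (tf 1)) (1 - 1)) by reflexivity. rewrite tf_Rps by auto.
    rewrite sum_O. simpl INR. assert (T := pow2_ge_0 (Cmod (alpha 0%nat))). simpl. lra.
  - subst s. unfold Defs.sigma.
    set (X := sum_n_m _ _ _).
    assert (HX : 0 <= X).
    { apply sum_n_m_nonneg. intros j. apply Rmult_le_pos. pose proof (pos_INR j); lra. apply pow2_ge_0. }
    split. apply sqrt_pos.
    set (n := (2 ^ (h + 1))%nat).
    assert (Hn : (1 <= n)%nat) by apply pow2_pos.
    exists (tf n). destruct (tf_l2 n) as [A B]; auto. split; auto. split; auto.
    exists (n - 1)%nat. rewrite tf_Rps by auto. rewrite pow2_sqrt by auto.
    assert (P := pow2_pos h).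
    assert (Hnr : INR n = 2 * 2 ^ h) by (unfold n; rewrite pow_INR, pow_add; simpl INR; replace (1+1) with 2 by lra; simpl; ring).
    assert (Hpos : forall k, 0 <= Cmod (alpha k) ^ 2 * INR (S k) ^ 2 / INR n).
    { intros k. apply Rmult_le_pos. apply Rmult_le_pos; apply pow2_ge_0.
      left; apply Rinv_0_lt_compat. apply lt_0_INR; lia. }
    eapply Rle_trans. 2: apply (sum_n_m_mono _ (2 ^ h) (n - 1) 0 (n - 1) Hpos); lia.
    replace (X / 2) with (sum_n_m (fun j => (INR j + 1) * Cmod (alpha j) ^ 2 * / 2) (2 ^ h) (n - 1)).
    2:{ rewrite (sum_n_m_mult_r (/ 2) (fun j => (INR j + 1) * Cmod (alpha j) ^ 2)). reflexivity. }
    apply sum_n_m_le_loc. intros k Hk.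
    assert (Hk2 : INR (2 ^ h) <= INR k) by (apply le_INR; lia).
    rewrite pow_INR in Hk2. simpl INR in Hk2. replace (1 + 1) with 2 in Hk2 by lra.
    assert (Hph : 0 < 2 ^ h) by (apply pow_lt; lra).
    rewrite Hnr, S_INR.
    set (y := INR k + 1). set (a := Cmod (alpha k) ^ 2). set (P2 := 2 ^ h) in *.
    assert (0 <= a) by apply pow2_ge_0.
    replace (a * y ^ 2 / (2 * P2)) with ((y * a * / 2) * (y / P2)) by (field; lra).
    rewrite <- (Rmult_1_r (y * a * / 2)) at 1.
    apply Rmult_le_compat_l. unfold y. pose proof (pos_INR k). apply Rmult_le_pos; [nra| lra].
    apply Rmult_le_reg_r with P2; auto. unfold y. field_simplify; lra.
Qed.

Lemma sqrt_half s P : 0 <= s -> s ^ 2 / 2 <= P -> s / sqrt 2 <= sqrt P.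
Proof.
  intros Hs H. rewrite <- (sqrt_pow2 s Hs) at 1. rewrite <- sqrt_div_alt by lra.
  apply sqrt_le_1_alt. exact H.
Qed.

Lemma lub_spec (E : Rbar -> Prop) : Rbar_is_lub E (Rbar_lub E).
Proof. unfold Rbar_lub. destruct (Rbar_ex_lub E); simpl; auto. Qed.

Lemma mult_pinf (c : R) : 0 < c -> Rbar_mult c p_infty = p_infty.
Proof.
  intros Hc. unfold Rbar_mult, Rbar_mult'. destruct (Rle_dec 0 c); [|lra].
  destruct (Rle_lt_or_eq_dec 0 c r). reflexivity. lra.
Qed.

Theorem theorem2p4 (alpha : nat -> C) (Halpha : sq_summable alpha) :
  (Rhaly_bounded alpha <-> sigma_bounded alpha) /\
  Rbar_le (Rbar_mult (/ sqrt 2) (sup_sigma alpha)) (opnorm alpha) /\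
  Rbar_le (opnorm alpha) (Rbar_mult (4 * sqrt 2) (sup_sigma alpha)).
Proof.
  assert (Hs2 : 0 < sqrt 2) by (apply sqrt_lt_R0; lra).
  assert (Hs2' : 1 <= sqrt 2) by (rewrite <- sqrt_1; apply sqrt_le_1_alt; lra).
  assert (Low : forall s, (s = sigma_m1 alpha \/ exists h, s = Defs.sigma alpha h) ->
    0 <= s /\ exists f, sq_summable f /\ l2norm f = 1 /\
      Rbar_le (Finite (s / sqrt 2)) (l2normE (Rhaly alpha f)) /\
      (sq_summable (Rhaly alpha f) -> s / sqrt 2 <= l2norm (Rhaly alpha f))).
  { intros s Hs. destruct (lower_set alpha s Hs) as [H0 [f [Hf [Hn [N HN]]]]].
    split; auto. exists f. split; auto. split; auto.
    assert (Q := sqrt_half s _ H0 HN). split.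
    - eapply Rbar_le_trans. 2: apply l2normE_ge. exact Q.
    - intros HR. eapply Rle_trans. exact Q. apply l2norm_ge; auto. }
  assert (Div : forall s M, s / sqrt 2 <= M -> s <= sqrt 2 * M).
  { intros s M H. replace s with (sqrt 2 * (s / sqrt 2)) by (field; lra).
    apply Rmult_le_compat_l; lra. }
  split; [split|split].
  - intros [M HM].
    assert (K : forall s, (s = sigma_m1 alpha \/ exists h, s = Defs.sigma alpha h) -> s <= sqrt 2 * M).
    { intros s Hs. destruct (Low s Hs) as [_ [f [Hf [Hn [_ H2]]]]].
      destruct (HM f Hf) as [HR HRn]. apply Div. eapply Rle_trans. apply H2; auto.
      rewrite Hn, Rmult_1_r in HRn. exact HRn. }
    exists (sqrt 2 * M). split. apply K; auto. intros k. apply K. right; exists k; auto.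
  - intros [M [H0 Hk]]. exists (4 * M). intros f Hf. apply upper_main; auto.
  - assert (OU := proj1 (lub_spec (fun r => exists f, sq_summable f /\ l2norm f = 1 /\ r = l2normE (Rhaly alpha f)))).
    assert (EU := proj1 (lub_spec (fun r => r = Finite (sigma_m1 alpha) \/ exists k, r = Finite (Defs.sigma alpha k)))).
    assert (EL := proj2 (lub_spec (fun r => r = Finite (sigma_m1 alpha) \/ exists k, r = Finite (Defs.sigma alpha k)))).
    fold (opnorm alpha) in OU. fold (sup_sigma alpha) in EU, EL.
    assert (K : forall s, (s = sigma_m1 alpha \/ exists h, s = Defs.sigma alpha h) ->
      0 <= s /\ Rbar_le (Finite (s / sqrt 2)) (opnorm alpha)).
    { intros s Hs. destruct (Low s Hs) as [H0 [f [Hf [Hn [H1 _]]]]]. split; auto.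
      eapply Rbar_le_trans. exact H1. apply OU. exists f; auto. }
    assert (K1 : Rbar_le (Finite (sigma_m1 alpha)) (sup_sigma alpha)) by (apply EU; left; auto).
    destruct (K (sigma_m1 alpha) (or_introl eq_refl)) as [Hm0 Km].
    remember (opnorm alpha) as o. destruct o as [o| |].
    + assert (UB : Rbar_is_upper_bound (fun r => r = Finite (sigma_m1 alpha) \/ exists k, r = Finite (Defs.sigma alpha k)) (Finite (sqrt 2 * o))).
      { intros x [Hx | [k Hx]]; subst x; simpl.
        - apply Div. apply (K _ (or_introl eq_refl)).
        - apply Div. apply (K _ (or_intror (ex_intro _ k eq_refl))). }
      assert (L := EL _ UB).
      destruct (sup_sigma alpha) as [e| |]; simpl in L, K1 |- *; try contradiction.
      replace o with (/ sqrt 2 * (sqrt 2 * o)) by (field; lra).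
      apply Rmult_le_compat_l; auto. left; apply Rinv_0_lt_compat; auto.
    + destruct (Rbar_mult (/ sqrt 2) (sup_sigma alpha)); simpl; auto.
    + simpl in Km. contradiction.
  - assert (OL := proj2 (lub_spec (fun r => exists f, sq_summable f /\ l2norm f = 1 /\ r = l2normE (Rhaly alpha f)))).
    assert (EU := proj1 (lub_spec (fun r => r = Finite (sigma_m1 alpha) \/ exists k, r = Finite (Defs.sigma alpha k)))).
    fold (opnorm alpha) in OL. fold (sup_sigma alpha) in EU.
    assert (K1 : Rbar_le (Finite (sigma_m1 alpha)) (sup_sigma alpha)) by (apply EU; left; auto).
    assert (K2 : forall k, Rbar_le (Finite (Defs.sigma alpha k)) (sup_sigma alpha))
      by (intros k; apply EU; right; exists k; auto).
    assert (Hm0 : 0 <= sigma_m1 alpha) by apply Cmod_ge_0.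
    remember (sup_sigma alpha) as e. destruct e as [e| |].
    + simpl in K1. assert (K2' : forall k, Defs.sigma alpha k <= e) by (intros k; exact (K2 k)).
      change (Rbar_mult (4 * sqrt 2) e) with (Finite (4 * sqrt 2 * e)).
      apply OL. intros x [f [Hf [Hn Hx]]]. subst x.
      destruct (upper_main alpha e K1 K2' f Hf) as [HR HRn].
      rewrite l2normE_eq by auto. simpl. rewrite Hn, Rmult_1_r in HRn.
      assert (0 <= e) by lra.
      eapply Rle_trans. exact HRn. nra.
    + rewrite mult_pinf by lra. destruct (opnorm alpha); simpl; auto.
    + simpl in K1. contradiction.
Qed.
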